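(* Let $n,m\ge 2$ and suppose $\gamma_{2t}(K_n\Box K_m)<2\min\{n,m\}$. Let $S$ be any total $2$-dominating set of $K_n\Box K_m$ with $|S|=\gamma_{2t}(K_n\Box K_m)$. Then: (1) for every $v\in V(K_n)$, $S\cap(\{v\}\times V(K_m))\neq\emptyset$, and for every $w\in V(K_m)$, $S\cap(V(K_n)\times\{w\})\neq\emptyset$; (2) there exists $v\in V(K_n)$ with $|S\cap(\{v\}\times V(K_m))|\ge 3$, and there exists $w\in V(K_m)$ with $|S\cap(V(K_n)\times\{w\})|\ge 3$.
   Context: For a graph $G=(V,E)$, a set $S\subseteq V$ is a total $2$-dominating set if every vertex of $V$ (including those in $S$) is adjacent to at least $2$ vertices of $S$; $\gamma_{2t}(G)$ is the minimum cardinality of such a set. $G\Box H$ denotes the Cartesian product: vertex set $V(G)\times V(H)$, with $(u_1,v_1)\sim(u_2,v_2)$ iff either $u_1=u_2$ and $v_1\sim v_2$, or $v_1=v_2$ and $u_1\sim u_2$. $K_n$ is the complete graph on $n$ vertices; $V(K_n)=\{v_1,\dots,v_n\}$, $V(K_m)=\{w_1,\dots,w_m\}$. *)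

(* Defs.v *)
From mathcomp Require Import all_boot.
Set Implicit Arguments. Unset Strict Implicit. Unset Printing Implicit Defensive.

(* Vertices of K_n □ K_m are pairs (i, j) : 'I_n * 'I_m. *)
Definition rook_adj (n m : nat) (x y : 'I_n * 'I_m) : bool :=
  ((x.1 == y.1) && (x.2 != y.2)) || ((x.2 == y.2) && (x.1 != y.1)).

Definition total2dom (n m : nat) (S : {set 'I_n * 'I_m}) : bool :=
  [forall x, 2 <= #|[set y in S | rook_adj x y]|].

(* gamma_{2t}(K_n □ K_m): minimum size of a total 2-dominating set
   (default value #|V| is only relevant if none exists). *)
Definition gamma2t (n m : nat) : nat :=
  \big[minn/#|[set: 'I_n * 'I_m]|]_(A : {set 'I_n * 'I_m} | total2dom A) #|A|.

(* Main.v *)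
Require Import Defs.
From mathcomp Require Import all_boot.
From mathcomp Require Import zify.
Set Implicit Arguments. Unset Strict Implicit. Unset Printing Implicit Defensive.

Lemma cols_bound (n m : nat) (S : {set 'I_n * 'I_m}) :
  (forall w : 'I_m, 2 <= #|[set x in S | x.2 == w]|) -> 2 * m <= #|S|.
Proof.
move=> H.
have -> : #|S| = \sum_(w : 'I_m) #|[set x in S | x.2 == w]|.
  rewrite -sum1_card (partition_big (fun x : 'I_n * 'I_m => x.2) xpredT) //=.
  apply: eq_bigr => w _; rewrite -sum1_card; apply: eq_bigl => x.
  by rewrite inE.
have L : \sum_(w : 'I_m) 2 <= \sum_(w : 'I_m) #|[set x in S | x.2 == w]|.
  by apply: leq_sum => w _; exact: H.
by move: L; rewrite sum_nat_const card_ord mulnC.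
Qed.

Lemma rows_bound (n m : nat) (S : {set 'I_n * 'I_m}) :
  (forall v : 'I_n, 2 <= #|[set x in S | x.1 == v]|) -> 2 * n <= #|S|.
Proof.
move=> H.
have -> : #|S| = \sum_(v : 'I_n) #|[set x in S | x.1 == v]|.
  rewrite -sum1_card (partition_big (fun x : 'I_n * 'I_m => x.1) xpredT) //=.
  apply: eq_bigr => w _; rewrite -sum1_card; apply: eq_bigl => x.
  by rewrite inE.
have L : \sum_(w : 'I_n) 2 <= \sum_(w : 'I_n) #|[set x in S | x.1 == w]|.
  by apply: leq_sum => w _; exact: H.
by move: L; rewrite sum_nat_const card_ord mulnC.
Qed.

Lemma cardU_le (T : finType) (A B : {set T}) : #|A :|: B| <= #|A| + #|B|.
Proof. by rewrite cardsU leq_subr. Qed.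

Lemma ar (a b R C : nat) : R = 1 + a -> C = 1 + b -> R <= 2 -> 1 < a + b -> 1 < C.
Proof. lia. Qed.

Theorem lemma3 (n m : nat) (hn : 2 <= n) (hm : 2 <= m)
  (hg : gamma2t n m < 2 * minn n m)
  (S : {set 'I_n * 'I_m}) (hS : total2dom S) (hcard : #|S| = gamma2t n m) :
  ((forall v : 'I_n, exists w : 'I_m, (v, w) \in S) /\
   (forall w : 'I_m, exists v : 'I_n, (v, w) \in S)) /\
  ((exists v : 'I_n, 3 <= #|[set x in S | x.1 == v]|) /\
   (exists w : 'I_m, 3 <= #|[set x in S | x.2 == w]|)).
Proof.
rewrite -hcard in hg.
have hSn : #|S| < 2 * n by apply: leq_trans hg _; rewrite leq_mul2l geq_minl orbT.
have hSm : #|S| < 2 * m by apply: leq_trans hg _; rewrite leq_mul2l geq_minr orbT.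
have adj x := forallP hS x.
have P1 : forall v : 'I_n, exists w : 'I_m, (v, w) \in S.
  move=> v; apply/existsP; rewrite -[X in is_true X]negbK negb_exists; apply/negP => /forallP E.
  have : 2 * m <= #|S|; last by rewrite leqNgt hSm.
  apply: cols_bound => w; apply: leq_trans (adj (v, w)) _; apply: subset_leq_card.
  apply/subsetP => [[a b]]; rewrite !inE /rook_adj /= => /andP [yS].
  case/orP => /andP [/eqP e1 e2].
    by subst a; move: (E b); rewrite yS.
  by subst; rewrite yS eqxx.
have P2 : forall w : 'I_m, exists v : 'I_n, (v, w) \in S.
  move=> w; apply/existsP; rewrite -[X in is_true X]negbK negb_exists; apply/negP => /forallP E.
  have : 2 * n <= #|S|; last by rewrite leqNgt hSn.
  apply: rows_bound => v; apply: leq_trans (adj (v, w)) _; apply: subset_leq_card.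
  apply/subsetP => [[a b]]; rewrite !inE /rook_adj /= => /andP [yS].
  case/orP => /andP [/eqP e1 e2].
    by subst; rewrite yS eqxx.
  by subst b; move: (E a); rewrite yS.
split; first by [].
split.
- apply/existsP; rewrite -[X in is_true X]negbK negb_exists; apply/negP => /forallP E.
  have : 2 * m <= #|S|; last by rewrite leqNgt hSm.
  apply: cols_bound => w; have [v vS] := P2 w.
  have H := adj (v, w).
  have Hsub : [set y in S | rook_adj (v, w) y] \subset
     ([set x in S | x.1 == v] :\ (v, w)) :|: ([set x in S | x.2 == w] :\ (v, w)).
    apply/subsetP => [[a b]]; rewrite !inE /rook_adj /= => /andP [yS].
    case/orP => /andP [/eqP e1 e2].
      by subst; rewrite yS eqxx /= xpair_eqE eqxx /= ?andbT; rewrite ?[a == v]eq_sym ?[b == w]eq_sym ?e2 ?orbT.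
    by subst; rewrite yS eqxx /= xpair_eqE eqxx /= ?andbT; rewrite ?[a == v]eq_sym ?[b == w]eq_sym ?e2 ?orbT.
  have := leq_trans H (leq_trans (subset_leq_card Hsub) (cardU_le _ _)).
  move: (E v); rewrite -ltnNge ltnS => Ev.
  have r := cardsD1 (v, w) [set x in S | x.1 == v].
  have c := cardsD1 (v, w) [set x in S | x.2 == w].
  rewrite !inE vS /= eqxx /= in r c.
  move=> HH; rewrite ?eqxx /= in r c; exact: ar r c Ev HH.
- apply/existsP; rewrite -[X in is_true X]negbK negb_exists; apply/negP => /forallP E.
  have : 2 * n <= #|S|; last by rewrite leqNgt hSn.
  apply: rows_bound => v; have [w vS] := P1 v.
  have H := adj (v, w).
  have Hsub : [set y in S | rook_adj (v, w) y] \subset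
     ([set x in S | x.2 == w] :\ (v, w)) :|: ([set x in S | x.1 == v] :\ (v, w)).
    apply/subsetP => [[a b]]; rewrite !inE /rook_adj /= => /andP [yS].
    case/orP => /andP [/eqP e1 e2].
      by subst; rewrite yS eqxx /= xpair_eqE eqxx /= ?andbT; rewrite ?[a == v]eq_sym ?[b == w]eq_sym ?e2 ?orbT.
    by subst; rewrite yS eqxx /= xpair_eqE eqxx /= ?andbT; rewrite ?[a == v]eq_sym ?[b == w]eq_sym ?e2 ?orbT.
  have := leq_trans H (leq_trans (subset_leq_card Hsub) (cardU_le _ _)).
  move: (E w); rewrite -ltnNge ltnS => Ew.
  have r := cardsD1 (v, w) [set x in S | x.1 == v].
  have c := cardsD1 (v, w) [set x in S | x.2 == w].
  rewrite !inE vS /= eqxx /= in r c.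
  move=> HH; rewrite ?eqxx /= in r c; exact: ar c r Ew HH.
Qed.
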